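(* Let $p,q$ be two different primes and $\nu\ge 1$ an integer. Then for each 3-CNF formula $\Phi(\bar x)$ with $n$ variables $\bar x=(x_1,\dots,x_n)$ and $\ell$ clauses there is a $\mathbb{Z}[p,q]$-expression $t^\Phi_{p,q}(\bar x)$ of size at most $2^{O(q^\nu\log\ell)}$ (with the implied constant depending only on $p,q$) such that for all $\bar a\in\{0,1\}^n$ we have $t^\Phi_{p,q}(\bar a)=0$ if the number of clauses of $\Phi$ not satisfied by $\bar a$ is divisible by $q^\nu$, and $t^\Phi_{p,q}(\bar a)=1$ otherwise.
   Context: Let $p,q$ be primes. Define $\mathsf b:\mathbb{Z}_p\to\mathbb{Z}_q$ by $\mathsf b(0)=0$ and $\mathsf b(x)=1$ for $x\neq0$. An $n$-ary $\mathbb{Z}[p,q]$-expression in variables $\bar x=(x_1,\dots,x_n)$ is an expression $t(\bar x)=\sum_{\beta\in\mathbb{Z}_p^n,\,c\in\mathbb{Z}_p}\alpha_{\beta,c}\cdot\mathsf b\big(\sum_{i=1}^n\beta_ix_i+c\big)$ with coefficients $\alpha_{\beta,c}\in\mathbb{Z}_q$, where the inner sums and products $\beta_ix_i$ are computed modulo $p$ and the outer sum and the multiplications by $\alpha_{\beta,c}$ modulo $q$; it defines a function $\mathbb{Z}_p^n\to\mathbb{Z}_q$, evaluated on $\{0,1\}^n\subseteq\mathbb{Z}_p^n$. Its size is $1+|L(t)|$, where $L(t)=\{(\beta,c):\alpha_{\beta,c}\neq0\}$. *)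

(* Defs.v *)
From mathcomp Require Import all_boot all_algebra.
Set Implicit Arguments. Unset Strict Implicit. Unset Printing Implicit Defensive.
Import GRing.Theory.
Local Open Scope ring_scope.

(* A literal over variables x_0..x_{n-1}: (i, true) is x_i, (i, false) is ~x_i. *)
Definition literal (n : nat) := ('I_n * bool)%type.
Definition clause (n : nat) := seq (literal n).
(* A CNF formula is a list (multiset) of clauses; its number of clauses is its size. *)
Definition cnf (n : nat) := seq (clause n).

Definition is_3cnf n (Phi : cnf n) : bool := all (fun C => size C <= 3)%N Phi.

Definition lit_sat n (a : {ffun 'I_n -> bool}) (l : literal n) : bool :=
  a l.1 == l.2.
Definition clause_sat n (a : {ffun 'I_n -> bool}) (C : clause n) : bool :=
  has (lit_sat a) C.
Definition num_unsat n (Phi : cnf n) (a : {ffun 'I_n -> bool}) : nat :=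
  count (fun C => ~~ clause_sat a C) Phi.

(* Z[p,q]-expressions in n variables: coefficient alpha_{beta,c} in Z_q for each
   beta in Z_p^n and c in Z_p. *)
Definition zpq_expr (p q n : nat) := {ffun ({ffun 'I_n -> 'F_p} * 'F_p) -> 'F_q}.

Definition bfun (p q : nat) (x : 'F_p) : 'F_q := (x != 0)%:R.

Definition zpq_eval p q n (t : zpq_expr p q n) (a : {ffun 'I_n -> bool}) : 'F_q :=
  \sum_(k : {ffun 'I_n -> 'F_p} * 'F_p)
     t k * bfun q (\sum_(i < n) k.1 i * (a i)%:R + k.2).

Definition zpq_size p q n (t : zpq_expr p q n) : nat :=
  1 + #|[set k | t k != 0%R]|.

(* Main.v *)
Require Import Defs.
From mathcomp Require Import all_boot all_algebra.
From mathcomp Require Import zify.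
Import GRing.Theory.

Lemma card_small_sets (l Q : nat) :
  (#|[set S : {set 'I_l} | #|S| <= Q]| <= l.+1 ^ Q)%N.
Proof.
pose f (S : {set 'I_l}) : {ffun 'I_Q -> option 'I_l} :=
  [ffun i : 'I_Q => nth None (map Some (enum S)) i].
have memf : forall S : {set 'I_l}, (#|S| <= Q)%N -> forall x, (x \in S) = (Some x \in codom (f S)).
  move=> S SQ x; apply/idP/codomP => [xS | [i]].
    have xi : (index x (enum S) < Q)%N.
      by rewrite (leq_trans _ SQ) // cardE index_mem mem_enum.
    exists (Ordinal xi); rewrite ffunE /= (nth_map x).
      by rewrite nth_index // mem_enum.
    by rewrite index_mem mem_enum.
  rewrite ffunE; case: (ltnP i (size (enum S))) => hi.
    by rewrite (nth_map x) // => -[->]; rewrite -mem_enum mem_nth.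
  by rewrite nth_default // size_map.
have := @leq_card_in _ _ f [set S : {set 'I_l} | #|S| <= Q]%N.
rewrite card_ffun card_option !card_ord; apply => S1 S2.
rewrite !inE => h1 h2 e; apply/setP => x; by rewrite (memf _ h1) (memf _ h2) e.
Qed.

Lemma card_bigcup_le (I T : finType) (P : pred I) (F : I -> {set T}) :
  (#|\bigcup_(i | P i) F i| <= \sum_(i | P i) #|F i|)%N.
Proof.
elim/big_rec2: _ => [|i n U _ le]; first by rewrite cards0.
by rewrite (leq_trans (leq_card_setU _ _).1) ?leq_add2l.
Qed.

Lemma sumn_shape_le (T : Type) (s : seq (seq T)) :
  all (fun C => size C <= 3)%N s -> (sumn (shape s) <= 3 * size s)%N.
Proof.
elim: s => //= C s IH /andP[hC hs].
by rewrite mulnS leq_add // IH.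
Qed.
Lemma arith p l Q : (0 < p -> 0 < Q ->
  1 + l.+2 ^ Q * (2 * p ^ (3 * Q)) <= l.+2 ^ ((3 * p + 3) * Q))%N.
Proof.
move=> p0 Q0; set L := l.+2.
have L2 : (2 <= L)%N by [].
have pL : (p <= L ^ p)%N.
  apply: leq_trans (ltnW (ltn_expl p (leqnn 2))) _.
  by rewrite leq_exp2r.
have e1 : (p ^ (3 * Q) <= L ^ (p * (3 * Q)))%N.
  rewrite (expnM L) leq_exp2r; [exact: pL | by rewrite muln_gt0].
have e2 : (3 <= L ^ (2 * Q))%N.
  apply: (@leq_trans (2 ^ 2)) => //; apply: (@leq_trans (L ^ 2)).
    by rewrite leq_exp2r.
  by apply: leq_pexp2l => //; rewrite -{1}(muln1 2) leq_mul2l.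
have pos : (0 < L ^ Q * p ^ (3 * Q))%N by rewrite muln_gt0 !expn_gt0 p0.
have -> : ((3 * p + 3) * Q = 2 * Q + Q + p * (3 * Q))%N.
  by lia.
rewrite (expnD L (2 * Q + Q)) (expnD L (2 * Q)); apply: (@leq_trans (3 * (L ^ Q * p ^ (3 * Q)))).
  by rewrite mulnCA; lia.
by rewrite -mulnA leq_mul // leq_mul.
Qed.
Local Open Scope ring_scope.
Lemma binQ q nu j : prime q -> (0 < j < q ^ nu)%N -> ('C(q ^ nu, j)%:R : 'F_q) = 0.
Proof.
move=> pq /andP[j0 jQ].
have hc : ([pchar {poly 'F_q}]).-nat (q ^ nu)%N.
  rewrite (eq_pnat _ (@pchar_poly _)) pnatX (pnatE _ pq) (pchar_Fp pq) //.
have := congr1 (fun P : {poly 'F_q} => P`_j) (exprDn_pchar 1 'X hc).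
rewrite exprDn coef_sum coefD expr1n coefC coefXn (gtn_eqF j0) (ltn_eqF jQ).
rewrite (bigD1 (Ordinal (leq_trans jQ (leqnSn _)))) //= big1 ?addr0.
  by rewrite expr1n mul1r coefMn coefXn eqxx.
move=> i /eqP ne; rewrite expr1n mul1r coefMn coefXn.
by case: eqP => [e|]; [case: ne; apply: val_inj => /= | rewrite mul0rn].
Qed.
Lemma binper q nu N k : prime q -> (k < q ^ nu)%N ->
  ('C(N + q ^ nu, k)%:R : 'F_q) = 'C(N, k)%:R.
Proof.
move=> pq kQ; rewrite addnC -binomial.Vandermonde natr_sum big_ord_recl bin0 mul1n subn0.
rewrite big1 ?addr0 // => i _; rewrite natrM binQ ?mul0r //=.
by rewrite /bump /= add1n (leq_trans _ kQ) // ltnS ltn_ord.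
Qed.

Lemma interp (R : pzRingType) (Q : nat) (g : nat -> R) : (0 < Q)%N ->
  (forall N, g (N + Q)%N = g N) ->
  (forall N k, (k < Q)%N -> ('C(N + Q, k)%:R : R) = 'C(N, k)%:R) ->
  exists c : nat -> R, forall N, \sum_(k < Q) c k * 'C(N, k)%:R = g N.
Proof.
move=> Q0 gper bper.
have step : forall M, (M <= Q)%N -> exists c : nat -> R,
    forall N, (N < M)%N -> \sum_(k < Q) c k * 'C(N, k)%:R = g N.
  elim=> [_|M IH MQ]; first by exists (fun _ => 0).
  have [c hc] := IH (ltnW MQ).
  pose d := g M - \sum_(k < Q) c k * 'C(M, k)%:R.
  exists (fun k => c k + (k == M)%:R * d) => N NM.
  have e : forall N, \sum_(k < Q) (c k + ((k : nat) == M)%:R * d) * 'C(N, k)%:R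
      = \sum_(k < Q) c k * 'C(N, k)%:R + d * 'C(N, M)%:R.
    move=> N'; rewrite (bigD1 (Ordinal MQ)) //= eqxx mul1r mulrDl -addrA.
    rewrite [in RHS](bigD1 (Ordinal MQ)) //= -addrA; congr (_ + _).
    rewrite addrC; congr (_ + _); apply: eq_bigr => i ne.
    by rewrite -val_eqE /= in ne; rewrite (negPf ne) mul0r addr0.
  rewrite e; move: NM; rewrite ltnS leq_eqVlt => /orP[/eqP->|NM].
    by rewrite binn mulr1 /d addrC subrK.
  by rewrite bin_small // mulr0 addr0 hc.
have [c hc] := step Q (leqnn Q).
exists c; elim/ltn_ind => N IH.
case: (ltnP N Q) => NQ; first exact: hc.
have NQN : (N - Q < N)%N by rewrite ltn_subrL Q0 (leq_trans Q0 NQ).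
rewrite -(subnK NQ) gper -(IH _ NQN).
by apply: eq_bigr => k _; rewrite bper.
Qed.
Section PSide.
Variables (p q n : nat).
Hypotheses (pp : prime p) (pq : prime q) (pnq : p != q).

Definition keyT := ({ffun 'I_n -> 'F_p} * 'F_p)%type.

Lemma sum_delta (f : keyT -> 'F_q) (k0 : keyT) :
  \sum_(k : keyT) (k == k0)%:R * f k = f k0.
Proof.
rewrite (bigD1 k0) //= eqxx mul1r big1 ?addr0 // => k /negPf ->.
by rewrite mul0r.
Qed.

Lemma sum_delta2 (f : keyT -> 'F_q) (k1 k0 : keyT) :
  \sum_(k : keyT) ((k == k1)%:R - (k == k0)%:R) * f k = f k1 - f k0.
Proof.
by under eq_bigr => k _ do rewrite mulrBl; rewrite sumrB !sum_delta.
Qed.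

Variable L : seq (literal n).
Definition lj (j : 'I_(size L)) : literal n := tnth (in_tuple L) j.
Definition litv (a : {ffun 'I_n -> bool}) (l : literal n) : 'F_p :=
  (lit_sat a l)%:R.
Definition gT := {ffun 'I_(size L) -> 'F_p}.
Definition beta (g : gT) : {ffun 'I_n -> 'F_p} :=
  [ffun i => \sum_(j < size L | (lj j).1 == i) (if (lj j).2 then g j else - g j)].
Definition cst (g : gT) : 'F_p := \sum_(j < size L | ~~ (lj j).2) g j.

Lemma affine (g : gT) (a : {ffun 'I_n -> bool}) :
  \sum_(i < n) beta g i * (a i)%:R + cst g = \sum_j g j * litv a (lj j).
Proof.
have -> : \sum_(i < n) beta g i * (a i)%:R =
    \sum_j (if (lj j).2 then g j else - g j) * (a (lj j).1)%:R.
  under eq_bigr => i _ do rewrite ffunE big_distrl /= big_mkcond /=.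
  rewrite exchange_big /=; apply: eq_bigr => j _.
  rewrite -big_mkcond /=.
  rewrite (eq_bigl (fun i => i == (lj j).1)); last by move=> i; rewrite eq_sym.
  by rewrite big_pred1_eq.
rewrite /cst [X in _ + X]big_mkcond /= -big_split /=; apply: eq_bigr => j _.
rewrite /litv /lit_sat; case: (lj j) => i s /=; case: s; case: (a i) => /=;
  rewrite ?mulr1 ?mulr0 ?addr0 ?add0r ?mulN1r ?mulrN1 ?mulNr ?addNr ?subrr //.
Qed.

Definition eL : zpq_expr p q n :=
  [ffun k => ((p ^ size L)%:R)^-1 *
     \sum_(g : gT) ((k == (beta g, cst g + 1))%:R - (k == (beta g, cst g))%:R)].


Lemma pR_neq0 m : ((p ^ m)%N%:R : 'F_q) != 0.
Proof.
rewrite natrX expf_neq0 //; apply/eqP => /(congr1 val); rewrite /= val_Fp_nat //.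
move/eqP; rewrite -/(dvdn q p) dvdn_prime2 // => /eqP hq.
by move: pnq; rewrite hq eqxx.
Qed.

Lemma eval_eL a :
  zpq_eval eL a = (all (fun l => ~~ lit_sat a l) L)%:R.
Proof.
rewrite /zpq_eval.
under eq_bigr => k _ do rewrite ffunE -mulrA big_distrl /=.
rewrite -big_distrr /= exchange_big /=.
under eq_bigr => g _ do rewrite sum_delta2 /= addrA !affine.
case: allP => [allf | nall].
  have v0 : forall g : gT, \sum_j g j * litv a (lj j) = 0.
    move=> g; apply: big1 => j _; rewrite /litv.
    by rewrite (negPf (allf _ (mem_tnth j (in_tuple L)))) mulr0.
  under eq_bigr => g _ do rewrite v0 add0r /bfun oner_eq0 eqxx /= subr0.
  rewrite sumr_const card_ffun card_Fp // card_ord mulVf //.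
  exact: pR_neq0.
have [j hj] : exists j, lit_sat a (lj j).
  case: (boolP (has (lit_sat a) L)) => [/hasP [x xL hx] | hn].
    have xi : (index x L < size L)%N by rewrite index_mem.
    exists (Ordinal xi).
    by rewrite /lj (tnth_nth x) /= nth_index.
  exfalso; apply: nall => x xL; apply: contra hn => hx; apply/hasP; by exists x.
pose h (g : gT) : gT := [ffun j' => g j' + (j' == j)%:R].
have hinj : injective h.
  move=> g1 g2 /ffunP e; apply/ffunP => j'; have := e j'; rewrite !ffunE.
  exact: addIr.
have hS : forall g, \sum_j' h g j' * litv a (lj j') = \sum_j' g j' * litv a (lj j') + 1.
  move=> g; under eq_bigr => j' _ do rewrite ffunE mulrDl.
  rewrite big_split /=; congr (_ + _).
  rewrite (bigD1 j) //= eqxx mul1r /litv hj big1 ?addr0 // => j' /negPf ->.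
  by rewrite mul0r.
rewrite sumrB [X in _ - X](reindex_inj hinj) /=.
under [X in _ - X]eq_bigr => g _ do rewrite hS.
by rewrite subrr mulr0.
Qed.

Lemma supp_eL : (#|[set k | eL k != 0%R]| <= 2 * p ^ size L)%N.
Proof.
set A := [set (beta g, cst g + 1) | g : gT].
set B := [set (beta g, cst g) | g : gT].
have sub : [set k | eL k != 0%R] \subset A :|: B.
  apply/subsetP => k; rewrite !inE; apply: contraR; rewrite negb_or => /andP[nA nB].
  rewrite ffunE big1 ?mulr0 ?eqxx // => g _.
  have -> : (k == (beta g, cst g + 1)) = false.
    by apply/negbTE; apply: contra nA => /eqP ->; apply: imset_f.
  have -> : (k == (beta g, cst g)) = false.
    by apply/negbTE; apply: contra nB => /eqP ->; apply: imset_f.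
  by rewrite subrr.
have cA : (#|A| <= p ^ size L)%N.
  by rewrite (leq_trans (leq_imset_card _ _)) // cardT -cardE card_ffun card_Fp // card_ord.
have cB : (#|B| <= p ^ size L)%N.
  by rewrite (leq_trans (leq_imset_card _ _)) // cardT -cardE card_ffun card_Fp // card_ord.
rewrite (leq_trans (subset_leq_card sub)) // (leq_trans (leq_card_setU A B).1) //.
by rewrite mul2n -addnn leq_add.
Qed.

End PSide.

Lemma eval_lin p q n (I : finType) (P : pred I) (w : I -> 'F_q)
  (e : I -> zpq_expr p q n) a :
  zpq_eval ([ffun k => \sum_(i | P i) w i * e i k] : zpq_expr p q n) a
  = \sum_(i | P i) w i * zpq_eval (e i) a.
Proof.
rewrite /zpq_eval; under eq_bigr => k _ do rewrite ffunE big_distrl /=.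
rewrite exchange_big; apply: eq_bigr => i _; rewrite [RHS]big_distrr.
by apply: eq_bigr => k _; apply: esym; apply: mulrA.
Qed.

Lemma card_count (T : Type) (x0 : T) (P : pred T) (s : seq T) :
  #|[set i : 'I_(size s) | P (nth x0 s i)]| = count P s.
Proof.
rewrite -sum1_card (eq_bigl (fun i : 'I_(size s) => P (nth x0 s i))); last first.
  by move=> i; rewrite inE.
rewrite -(big_mkord (fun i => P (nth x0 s i)) (fun _ => 1%N)).
rewrite sum1_count; have -> : count P s = count P (mkseq (nth x0 s) (size s)) by rewrite mkseq_nth.
by rewrite /mkseq count_map /index_iota subn0.
Qed.

Lemma pick_sum (R : nzRingType) (m Q : nat) (b : bool) (f : nat -> R) :
  (if (m < Q)%N && b then f m else 0) =
  \sum_(k < Q) (if (m == k) && b then f k else 0).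
Proof.
case: (ltnP m Q) => mQ /=.
  rewrite (bigD1 (Ordinal mQ)) //= eqxx /= big1 ?addr0 // => k.
  by rewrite -val_eqE /= eq_sym => /negPf ->.
by rewrite big1 // => k _; case: eqP => // e; move: (ltn_ord k); rewrite -e ltnNge mQ.
Qed.

Lemma all_flatten' (T : Type) (P : pred T) (ss : seq (seq T)) :
  all P (flatten ss) = all (all P) ss.
Proof. by elim: ss => //= s ss IH; rewrite all_cat IH. Qed.

Theorem lemma3p5 (p q : nat) :
  prime p -> prime q -> p != q ->
  exists C : nat, forall (nu : nat), (1 <= nu)%N ->
  forall (n : nat) (Phi : cnf n), is_3cnf Phi ->
  exists t : zpq_expr p q n,
    (zpq_size t <= (size Phi).+1 ^ (C * q ^ nu))%N /\
    forall a : {ffun 'I_n -> bool},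
      zpq_eval t a = (if (q ^ nu %| num_unsat Phi a)%N then 0 else 1).
Proof.
move=> pp pq pnq; exists (3 * p + 3)%N => nu nu1 n Phi h3.
set Q := (q ^ nu)%N.
have Q0 : (0 < Q)%N by rewrite expn_gt0 prime_gt0.
case E: (size Phi) => [|l'].
  move/eqP: E; rewrite size_eq0 => /eqP ->.
  exists [ffun => 0]; split.
    rewrite /zpq_size exp1n.
    have -> : [set k | ([ffun=> 0] : zpq_expr p q n) k != 0] = set0.
      by apply/setP => k; rewrite !inE ffunE eqxx.
    by rewrite cards0.
  move=> a; rewrite /num_unsat /= dvdn0 /zpq_eval big1 // => k _.
  by rewrite ffunE mul0r.
rewrite -E.
pose g (N : nat) : 'F_q := if (Q %| N)%N then 0 else 1.
have gper : forall N, g (N + Q)%N = g N.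
  by move=> N; rewrite /g dvdn_addl.
have [c hc] := @interp _ Q g Q0 gper (fun N k kQ => @binper q nu N k pq kQ).
pose cl (i : 'I_(size Phi)) := nth [::] Phi i.
pose LS (S : {set 'I_(size Phi)}) := flatten [seq cl i | i <- enum S].
pose t : zpq_expr p q n := [ffun k => \sum_(S : {set 'I_(size Phi)} | (#|S| < Q)%N)
   c #|S| * eL p q n (LS S) k].
exists t; split.
  rewrite /zpq_size.
  have sub : [set k | t k != 0] \subset
      \bigcup_(S : {set 'I_(size Phi)} | (#|S| < Q)%N) [set k | eL p q n (LS S) k != 0].
    apply/subsetP => k; rewrite inE; apply: contraR => nk.
    rewrite ffunE big1 ?eqxx // => S SQ.
    have : k \notin [set k | eL p q n (LS S) k != 0].
      by apply: contra nk => kin; apply/bigcupP; exists S.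
    by rewrite inE negbK => /eqP ->; rewrite mulr0.
  have sizeLS : forall S : {set 'I_(size Phi)}, (#|S| < Q)%N -> (size (LS S) <= 3 * Q)%N.
    move=> S SQ.
    have hall : all (fun C => size C <= 3)%N [seq cl i | i <- enum S].
      rewrite all_map; apply/allP => i _ /=; exact: (allP h3) _ (mem_nth _ (ltn_ord i)).
    rewrite /LS size_flatten (leq_trans (@sumn_shape_le _ _ hall)) //.
    by rewrite size_map -cardE leq_mul2l ltnW.
  have c1 : (#|[set k | t k != 0%R]| <= \sum_(S : {set 'I_(size Phi)} | (#|S| < Q)%N) 2 * p ^ (3 * Q))%N.
    apply: leq_trans (subset_leq_card sub) _; apply: leq_trans (card_bigcup_le _ _ _ _) _.
    apply: leq_sum => S SQ.
    apply: leq_trans (@supp_eL p q n pp (LS S)) _.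
    by rewrite leq_mul2l leq_pexp2l ?prime_gt0 ?sizeLS ?orbT.
  have c2 : (\sum_(S : {set 'I_(size Phi)} | (#|S| < Q)%N) 2 * p ^ (3 * Q)
       <= l'.+2 ^ Q * (2 * p ^ (3 * Q)))%N.
    rewrite sum_nat_const leq_mul2r; apply/orP; right.
    rewrite -E; apply: leq_trans (card_small_sets _ _); apply: subset_leq_card.
    by apply/subsetP => S; rewrite !inE; exact: ltnW.
  rewrite E; apply: leq_trans (arith p l' Q (prime_gt0 pp) Q0).
  by rewrite leq_add2l (leq_trans c1 c2).
move=> a.
rewrite eval_lin.
under eq_bigr => S _ do rewrite eval_eL //.
set U := [set i : 'I_(size Phi) | ~~ clause_sat a (cl i)].
have allE : forall S, all (fun l => ~~ lit_sat a l) (LS S) = (S \subset U).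
  move=> S; rewrite /LS all_flatten' all_map; apply/allP/subsetP => h i iS.
    have := h i; rewrite mem_enum => /(_ iS) /= hi.
    by rewrite inE /clause_sat -all_predC.
  by move: (h i); rewrite -mem_enum => /(_ iS); rewrite inE /clause_sat -all_predC.
have cardU : #|U| = num_unsat Phi a := @card_count _ [::] _ Phi.
under eq_bigr => S _ do rewrite allE.
rewrite big_mkcond /=.
transitivity (\sum_(S : {set 'I_(size Phi)}) \sum_(k < Q) (if (#|S| == k) && (S \subset U) then c k else 0)).
  apply: eq_bigr => S _; rewrite -pick_sum; case: (_ < Q)%N; case: (S \subset U) => /=;
  by rewrite ?mulr1 ?mulr0.
rewrite exchange_big /=.
transitivity (\sum_(k < Q) c k * ('C(#|U|, k))%:R); last by rewrite hc cardU.
apply: eq_bigr => k _.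
rewrite -cards_draws mulr_natr -sumr_const [RHS]big_mkcond; apply: eq_bigr => S _.
by rewrite inE andbC.
Qed.
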